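(* For the FCIQMC step $v_{t+1}=F(A,v_t)$ and $\xi_{t+1}=v_{t+1}-Av_t$, $$\mathbb{E}\bigl(\|\xi_{t+1}\|_2^2\mid\mathcal{F}_t\bigr)\le\Bigl(\max_{1\le k\le N}(\|a_k\|_0-2)\|a_{o,k}\|_2^2+\tfrac12\Bigr)\frac{\|v_t\|_1^2}{M_t},$$ where $a_k=A(:,k)$ is the $k$-th column of $A$, $a_{o,k}$ is the $k$-th column of $A_o$, and $M_t=\|v_t\|_1$.
   Context: Let $A\in\mathbb{R}^{N\times N}$ be real symmetric, with every diagonal entry nonzero and every column having at least 2 nonzero entries. Write $A=A_d+A_o$ with $A_d$ the diagonal part and $A_o$ the off-diagonal part; $\|x\|_0$ is the number of nonzero entries; $e_l$ the $l$-th standard basis vector. FCIQMC step: the current iterate $v_t\in\mathbb{Z}^N$ is represented by $M_t=\|v_t\|_1$ signed particles, $|v_t(k)|$ particles at location $k$ each with sign $\mathrm{sgn}(v_t(k))$ (so $v_t$ is the sum of $s_\alpha e_{l_\alpha}$ over particles $\alpha$ with location $l_\alpha$ and sign $s_\alpha$). For each particle $\alpha$ with location $k$ and sign $s$, independently of all other particles (conditionally on $\mathcal F_t$): (Spawning) choose $l$ uniformly at random among the $\|a_{o,k}\|_0$ indices $j$ with $A_o(j,k)\neq0$; let $Q=\|a_{o,k}\|_0|A(l,k)|$ and let $n=\lfloor Q\rfloor$ with probability $1-(Q-\lfloor Q\rfloor)$ and $n=\lfloor Q\rfloor+1$ with probability $Q-\lfloor Q\rfloor$; contribute $n\,\mathrm{sgn}(A(l,k)s)\,e_l$.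 (Diagonal cloning/death) independently, let $Q=|A(k,k)|$, $n$ chosen by the same rounding rule, and contribute $n\,\mathrm{sgn}(A(k,k)s)\,e_k$. (Annihilation) $v_{t+1}=F(A,v_t)$ is the sum of all contributions of all particles (particles of opposite sign at the same location cancel, so $v_{t+1}$ again has $\|v_{t+1}\|_1$ particles). $\mathcal{F}_t=\sigma(v_1,\dots,v_t)$. *)

(* Defs.v *)
From HB Require Import structures.
From mathcomp Require Import all_boot all_order all_algebra.
Set Implicit Arguments. Unset Strict Implicit. Unset Printing Implicit Defensive.
Import Order.TTheory GRing.Theory Num.Theory.
Local Open Scope ring_scope.

Section FCIQMC.
Variables (R : archiRealFieldType) (N : nat).
Implicit Types (A : 'M[R]_N) (v : 'I_N -> int).

Definition nnz_col A (k : 'I_N) : nat := #|[set i | A i k != 0]|.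
Definition nnz_off A (k : 'I_N) : nat := #|[set i | (i != k) && (A i k != 0)]|.
Definition sqnorm_off A (k : 'I_N) : R := \sum_(i < N | i != k) A i k ^+ 2.

Definition l1norm v : nat := \sum_(k < N) `|v k|%N.

Definition frac (x : R) : R := x - (Num.floor x)%:~R.
(* probability that the stochastic rounding of Q returns floor Q + b *)
Definition round_prob (Q : R) (b : bool) : R := if b then frac Q else 1 - frac Q.
Definition round_val (Q : R) (b : bool) : R := (Num.floor Q + b%:Z)%:~R.

Definition particles v : seq ('I_N * int) :=
  flatten [seq nseq `|v k|%N (k, Num.sg (v k)) | k <- enum 'I_N].
Definition npart v : nat := size (particles v).
Definition particle v (a : 'I_(npart v)) : 'I_N * int := tnth (in_tuple (particles v)) a.

(* random choices of one particle: spawn target l, spawn round-up bit, diagonal round-up bit *)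
Definition choice := ('I_N * bool * bool)%type.

Definition choice_prob A (k : 'I_N) (c : choice) : R :=
  let: (l, b, d) := c in
  (if (l != k) && (A l k != 0) then ((nnz_off A k)%:R)^-1 else 0)
  * round_prob ((nnz_off A k)%:R * `|A l k|) b
  * round_prob `|A k k| d.

Definition contrib A (k : 'I_N) (s : int) (c : choice) (i : 'I_N) : R :=
  let: (l, b, d) := c in
  round_val ((nnz_off A k)%:R * `|A l k|) b * Num.sg (A l k * s%:~R) * (i == l)%:R
  + round_val `|A k k| d * Num.sg (A k k * s%:~R) * (i == k)%:R.

Definition outcome v := {ffun 'I_(npart v) -> choice}.

Definition outcome_prob A v (w : outcome v) : R :=
  \prod_(a < npart v) choice_prob A (particle a).1 (w a).

(* v_{t+1} = F(A, v_t) for the outcome w (annihilation = summation) *)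
Definition Fstep A v (w : outcome v) (i : 'I_N) : R :=
  \sum_(a < npart v) contrib A (particle a).1 (particle a).2 (w a) i.

Definition Amulv A v (i : 'I_N) : R := \sum_(j < N) A i j * (v j)%:~R.

Definition xi A v (w : outcome v) (i : 'I_N) : R := Fstep A w i - Amulv A v i.

Definition exp_sq_err A v : R :=
  \sum_(w : outcome v) outcome_prob A w * \sum_(i < N) xi A w i ^+ 2.

End FCIQMC.

(* Main.v *)
Require Import Defs.
From HB Require Import structures.
From mathcomp Require Import all_boot all_order all_algebra.
From mathcomp Require Import ring lra.
Import Order.TTheory GRing.Theory Num.Theory.
Local Open Scope ring_scope.
Set Implicit Arguments. Unset Strict Implicit. Unset Printing Implicit Defensive.

Section Rnd.
Variable R : archiRealFieldType.
Implicit Types Q x : R.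

Lemma rv_true Q : round_val Q true = (Num.floor Q)%:~R + 1.
Proof. by rewrite /round_val intrD. Qed.
Lemma rv_false Q : round_val Q false = (Num.floor Q)%:~R.
Proof. by rewrite /round_val addr0. Qed.

Lemma rnd_sum Q : \sum_(b : bool) round_prob Q b = 1.
Proof. rewrite big_bool /round_prob /=; rewrite addrC subrK //. Qed.

Lemma rnd_mean Q : \sum_(b : bool) round_prob Q b * round_val Q b = Q.
Proof. rewrite big_bool /round_prob rv_true rv_false /Defs.frac /=. ring. Qed.

Lemma rnd_sq Q x : \sum_(b : bool) round_prob Q b * (round_val Q b - x) ^+ 2
   = Defs.frac Q * (1 - Defs.frac Q) + (Q - x) ^+ 2.
Proof. rewrite big_bool /round_prob rv_true rv_false /Defs.frac /=. ring. Qed.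

Lemma quarter (f : R) : f * (1 - f) <= 4^-1.
Proof.
have h : 0 <= (2 * f - 1) ^+ 2 by apply: sqr_ge0.
have e : f * (1 - f) = (1 - (2 * f - 1) ^+ 2) / 4 by field.
rewrite e ler_pdivrMr // mulVf //; lra.
Qed.
Lemma in_one Q D : \sum_(b : bool) \sum_(d : bool) (round_prob Q b * round_prob D d * 1) = 1.
Proof. rewrite !big_bool /round_prob /=; ring. Qed.

Lemma in_mean Q D x y : \sum_(b : bool) \sum_(d : bool)
   (round_prob Q b * round_prob D d * (round_val Q b * x + round_val D d * y)) = Q * x + D * y.
Proof. rewrite !big_bool /round_prob !rv_true !rv_false /Defs.frac /=; ring. Qed.

Lemma in_sq Q D s1 a1 s2 a2 Z : \sum_(b : bool) \sum_(d : bool)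
   (round_prob Q b * round_prob D d * ((round_val Q b * s1 - a1) ^+ 2 + (round_val D d * s2 - a2) ^+ 2 + Z))
   = s1 ^+ 2 * (Defs.frac Q * (1 - Defs.frac Q)) + (Q * s1 - a1) ^+ 2
     + s2 ^+ 2 * (Defs.frac D * (1 - Defs.frac D)) + (D * s2 - a2) ^+ 2 + Z.
Proof. rewrite !big_bool /round_prob !rv_true !rv_false /Defs.frac /=; ring. Qed.
End Rnd.

Section Prod.
Variables (R : comRingType) (I C : finType) (p : I -> C -> R).

Lemma sum_ffun_prod (G : I -> C -> R) :
  \sum_(w : {ffun I -> C}) \prod_a (p a (w a) * G a (w a))
  = \prod_a \sum_c p a c * G a c.
Proof. by rewrite bigA_distr_bigA. Qed.

Lemma exp2 (F : I -> C -> R) (a0 a1 : I) :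
  (forall a, \sum_c p a c = 1) ->
  (forall a, \sum_c p a c * F a c = 0) ->
  \sum_(w : {ffun I -> C}) (\prod_a p a (w a)) * (F a0 (w a0) * F a1 (w a1))
  = if a0 == a1 then \sum_c p a0 c * F a0 c ^+ 2 else 0.
Proof.
move=> H1 H0.
case: eqP => [<-|ne].
  pose G a c := if a == a0 then F a0 c ^+ 2 else 1.
  transitivity (\sum_(w : {ffun I -> C}) \prod_a (p a (w a) * G a (w a))).
    apply: eq_bigr => w _; rewrite big_split /=; congr (_ * _).
    rewrite (bigD1 a0) //= big1 ?mulr1 /G ?eqxx ?expr2 //.
    by move=> a /negPf ->.
  rewrite sum_ffun_prod (bigD1 a0) //= [X in _ * X]big1 ?mulr1 /G ?eqxx //.
  by move=> a /negPf ->; under eq_bigr do rewrite mulr1; apply: H1.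
pose G a c := if a == a0 then F a0 c else if a == a1 then F a1 c else 1.
have ne' : a1 != a0 by apply/eqP => h; apply: ne.
transitivity (\sum_(w : {ffun I -> C}) \prod_a (p a (w a) * G a (w a))).
  apply: eq_bigr => w _; rewrite big_split /=; congr (_ * _).
  rewrite (bigD1 a0) //= (bigD1 a1) /=; last by rewrite ne'.
  rewrite big1 ?mulr1; last by move=> a /andP[/negPf h0 /negPf h1]; rewrite /G h0 h1.
  by rewrite /G eqxx (negPf ne') eqxx.
by rewrite sum_ffun_prod (bigD1 a0) //= /G eqxx H0 mul0r.
Qed.
End Prod.
Section Part.
Variables (R : archiRealFieldType) (N : nat).
Implicit Types (A : 'M[R]_N) (v : 'I_N -> int).

Lemma sum_particles v (F : 'I_N * int -> R) :
  \sum_(a < npart v) F (particle a) = \sum_(x <- particles v) F x.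
Proof. by rewrite [RHS]big_tnth. Qed.

Lemma mem_particles v x : x \in particles v -> x.2 = Num.sg (v x.1) /\ v x.1 != 0.
Proof.
move=> /flattenP [s /mapP [k _ ->]]; rewrite mem_nseq => /andP [h /eqP ->] /=.
by split => //; rewrite -absz_eq0 -lt0n.
Qed.

Lemma particle_sign v (a : 'I_(npart v)) :
  (particle a).2 = 1 \/ (particle a).2 = -1.
Proof.
have [-> h] := mem_particles (mem_tnth a (in_tuple (particles v))).
case: (ltrgtP (v (particle a).1) 0) => [lt|gt|e]; last by rewrite e in h.
  by right; rewrite ltr0_sg.
by left; rewrite gtr0_sg.
Qed.

Lemma npartE v : npart v = l1norm v.
Proof.
rewrite /npart /particles size_flatten /shape -map_comp /l1norm.
rewrite sumnE big_map big_enum /=.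
by apply: eq_bigr => k _; rewrite /= size_nseq.
Qed.

Lemma Amulv_particles A v i :
  Amulv A v i = \sum_(a < npart v) ((particle a).2)%:~R * A i (particle a).1.
Proof.
rewrite (sum_particles v (fun x => (x.2)%:~R * A i x.1)) /particles big_flatten big_map.
rewrite big_enum /Amulv; apply: eq_bigr => k _.
rewrite big_nseq /=.
have -> : forall n (y : R), iter n (+%R y) 0 = y *+ n.
  by elim=> [|n ih] y //=; rewrite ih mulrS.
have e : (v k)%:~R = (Num.sg (v k))%:~R * (`|v k|%N)%:R :> R.
  by rewrite -[(`|v k|%N)%:R]/((`|v k|%N%:Z)%:~R) -intrM abszE -numEsg.
rewrite e -mulr_natr; ring.
Qed.

End Part.

Section One.
Variables (R : archiRealFieldType) (N : nat) (A : 'M[R]_N) (k : 'I_N).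

Definition wt (l : 'I_N) : R :=
  if (l != k) && (A l k != 0) then ((nnz_off A k)%:R)^-1 else 0.
Definition Ql (l : 'I_N) : R := (nnz_off A k)%:R * `|A l k|.

Lemma sum_choice (F : choice N -> R) :
  \sum_c F c = \sum_l \sum_(b : bool) \sum_(d : bool) F (l, b, d).
Proof.
transitivity (\sum_(x : 'I_N * bool) \sum_(d : bool) F (x, d)).
  by rewrite pair_bigA; apply: eq_bigr => -[x d].
by rewrite (pair_bigA _ (fun l b => \sum_(d : bool) F (l, b, d))); apply: eq_bigr => -[x d].
Qed.

Lemma decomp (G : choice N -> R) :
  \sum_c choice_prob A k c * G c =
  \sum_l wt l * \sum_(b : bool) \sum_(d : bool)
      (round_prob (Ql l) b * round_prob `|A k k| d * G (l, b, d)).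
Proof.
rewrite sum_choice; apply: eq_bigr => l _; rewrite mulr_sumr; apply: eq_bigr => b _.
rewrite mulr_sumr; apply: eq_bigr => d _; rewrite /choice_prob /wt /Ql; ring.
Qed.

Hypothesis Hkk : A k k != 0.
Hypothesis Hm : (0 < nnz_off A k)%N.

Lemma m_neq0 : (nnz_off A k)%:R != 0 :> R.
Proof. by rewrite pnatr_eq0 -lt0n. Qed.

Lemma sum_wt (H : 'I_N -> R) :
  \sum_l wt l * H l = ((nnz_off A k)%:R)^-1 * \sum_(l | (l != k) && (A l k != 0)) H l.
Proof.
rewrite mulr_sumr [RHS]big_mkcond; apply: eq_bigr => l _; rewrite /wt.
by case: ifP => _; rewrite ?mul0r ?mulr0.
Qed.

Lemma sum_wt1 : \sum_l wt l = 1.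
Proof.
transitivity (\sum_l wt l * 1); first by apply: eq_bigr => l _; rewrite mulr1.
rewrite sum_wt.
rewrite (eq_bigl (fun l => l \in [set l | (l != k) && (A l k != 0)])); last first.
  by move=> l; rewrite inE.
rewrite sumr_const. by rewrite -/(nnz_off A k) mulVf // m_neq0.
Qed.

Lemma sum_S (f : 'I_N -> R) : (forall l, A l k = 0 -> f l = 0) ->
  \sum_(l | (l != k) && (A l k != 0)) f l = \sum_(l | l != k) f l.
Proof.
move=> hf; rewrite big_mkcondr; apply: eq_bigr => l _.
by case: eqP => [/hf ->|].
Qed.

Lemma contrib1 l b d i : contrib A k 1 (l, b, d) i =
  round_val (Ql l) b * (Num.sg (A l k) * (i == l)%:R)
  + round_val `|A k k| d * (Num.sg (A k k) * (i == k)%:R).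
Proof. by rewrite /contrib /Ql !mulr1 !mulrA. Qed.

Lemma sum_prob : \sum_c choice_prob A k c = 1.
Proof.
transitivity (\sum_c choice_prob A k c * 1); first by apply: eq_bigr => c _; rewrite mulr1.
rewrite decomp -[RHS]sum_wt1; apply: eq_bigr => l _; by rewrite in_one mulr1.
Qed.

Lemma mean1 i : \sum_c choice_prob A k c * contrib A k 1 c i = A i k.
Proof.
rewrite decomp.
under eq_bigr => l _ do under eq_bigr => b _ do under eq_bigr => d _ do rewrite contrib1.
under eq_bigr => l _ do rewrite in_mean mulrDr.
rewrite big_split /= -mulr_suml sum_wt1 mul1r sum_wt.
rewrite sum_S; last by move=> l ->; rewrite sgr0 !mul0r mulr0.
have hx : forall x e : R, `|x| * (Num.sg x * e) = x * e.
  by move=> x e; rewrite [in RHS](numEsg x); ring.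
under eq_bigr => l _ do rewrite /Ql -mulrA hx.
rewrite hx -mulr_sumr mulrA mulVf ?m_neq0 // mul1r.
rewrite big_mkcond (bigD1 i) //= big1; last first.
  by move=> l /negPf h; rewrite (eq_sym i l) h mulr0; case: ifP.
rewrite eqxx mulr1 addr0.
case: (eqVneq i k) => [->|ne]; first by rewrite /= mulr1 add0r.
by rewrite /= mulr0 addr0.
Qed.

Lemma sq_split l b d : l != k ->
  \sum_i (contrib A k 1 (l, b, d) i - A i k) ^+ 2 =
  (round_val (Ql l) b * Num.sg (A l k) - A l k) ^+ 2
  + (round_val `|A k k| d * Num.sg (A k k) - A k k) ^+ 2
  + (sqnorm_off A k - A l k ^+ 2).
Proof.
move=> hl.
under eq_bigr => i _ do rewrite contrib1.
rewrite (bigD1 l) //= (bigD1 k) /=; last by rewrite eq_sym.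
rewrite eqxx (negPf hl) eq_sym (negPf hl) /sqnorm_off (bigD1 l hl) /=.
have -> : \sum_(i | (i != k) && (i != l)) A i k ^+ 2
        = \sum_(i | (i != l) && (i != k)) A i k ^+ 2.
  by apply: eq_bigl => i; rewrite andbC.
rewrite (eq_bigr (fun i => A i k ^+ 2)); last first.
  by move=> i /andP[/negPf h1 /negPf h2]; rewrite h1 h2 /=; ring.
rewrite eqxx /=; ring.
Qed.

Lemma var1 : \sum_c choice_prob A k c * \sum_i (contrib A k 1 c i - A i k) ^+ 2
   <= ((nnz_off A k)%:R - 1) * sqnorm_off A k + 2^-1.
Proof.
set m := (nnz_off A k)%:R.
set s := sqnorm_off A k.
rewrite decomp.
have hm : m != 0 by apply: m_neq0.
pose B l := 2^-1 + s + (m ^+ 2 - 2 * m) * A l k ^+ 2.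
apply: (@le_trans _ _ (\sum_l wt l * B l)).
  apply: ler_sum => l _.
  rewrite /wt; case: ifP => hS; last by rewrite !mul0r.
  have /andP [hl ha] := hS.
  rewrite ler_wpM2l ?invr_ge0 ?ler0n //.
  under eq_bigr => b _ do under eq_bigr => d _ do rewrite (sq_split _ _ hl).
  rewrite in_sq !sqr_sg ha Hkk !mul1r.
  have e1 : forall x : R, `|x| * Num.sg x = x by move=> x; rewrite mulrC -numEsg.
  rewrite e1 subrr expr0n /= addr0 /Ql -mulrA e1 /B.
  have q1 := quarter (Defs.frac (m * `|A l k|)).
  have q2 := quarter (Defs.frac `|A k k|).
  have h4 : (4 : R)^-1 + 4^-1 = 2^-1.
    by field.
  have -> : (m * A l k - A l k) ^+ 2 = (m ^+ 2 - 2 * m) * A l k ^+ 2 + A l k ^+ 2 by ring.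
  rewrite -/m -/s; lra.
rewrite /B.
under eq_bigr => l _ do rewrite mulrDr.
rewrite big_split /= -mulr_suml sum_wt1 mul1r sum_wt.
rewrite sum_S; last by move=> l ->; rewrite expr0n /= mulr0.
rewrite -mulr_sumr -/s.
have -> : m^-1 * ((m ^+ 2 - 2 * m) * s) = (m - 2) * s by field.
lra.
Qed.
End One.

Section Main.
Variables (R : archiRealFieldType) (N : nat).
Implicit Types (A : 'M[R]_N) (v : 'I_N -> int).

Lemma nnz_colE A k : A k k != 0 -> nnz_col A k = (nnz_off A k).+1.
Proof.
move=> hk; rewrite /nnz_col /nnz_off.
have -> : [set i | A i k != 0] = k |: [set i | (i != k) && (A i k != 0)].
  apply/setP => i; rewrite !inE; case: (eqVneq i k) => [->|] //=; by rewrite hk.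
by rewrite cardsU1 inE eqxx.
Qed.

Lemma contrib_sign A k (s : int) c i : s = 1 \/ s = -1 ->
  contrib A k s c i = s%:~R * contrib A k 1 c i.
Proof.
case=> ->; case: c => [[l b] d]; rewrite /contrib; first by rewrite !mul1r.
rewrite mulrN1z !mulrN1 !sgrN !mulr1; ring.
Qed.


End Main.

Unset Implicit Arguments.
Theorem mainTheorem4 (R : archiRealFieldType) (N : nat) (A : 'M[R]_N)
  (v : 'I_N -> int)
  (Hsym : A^T = A)
  (Hdiag : forall k : 'I_N, A k k != 0)
  (Hcol : forall k : 'I_N, (2 <= nnz_col A k)%N) :
  exp_sq_err A v <=
    (\big[Num.max/0]_(k < N)
        (((nnz_col A k)%:R - 2) * sqnorm_off A k) + 2^-1)
    * ((l1norm v)%:R ^+ 2 / (l1norm v)%:R).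
Proof.
have Hm : forall k, (0 < nnz_off A k)%N.
  by move=> k; have := Hcol k; rewrite nnz_colE.
set K := \big[Num.max/0]_(k < N) _.
pose p (a : 'I_(npart v)) c := choice_prob A (particle a).1 c.
pose Y (a : 'I_(npart v)) c i :=
  contrib A (particle a).1 (particle a).2 c i - ((particle a).2)%:~R * A i (particle a).1.
have xiE : forall (w : outcome v) i, xi A w i = \sum_a Y a (w a) i.
  by move=> w i; rewrite /xi Amulv_particles /Fstep -sumrB.
have P1 : forall a, \sum_c p a c = 1 by move=> a; apply: sum_prob.
have P0 : forall i a, \sum_c p a c * Y a c i = 0.
  move=> i a; rewrite /p /Y.
  rewrite (eq_bigr (fun c => ((particle a).2)%:~R * (choice_prob A (particle a).1 c
       * contrib A (particle a).1 1 c i)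
     - (((particle a).2)%:~R * A i (particle a).1) * choice_prob A (particle a).1 c)); last first.
    by move=> c _; rewrite (contrib_sign _ _ _ _ (particle_sign a)); ring.
  rewrite sumrB -!mulr_sumr mean1 // sum_prob //; ring.
have step2 : exp_sq_err A v = \sum_i \sum_a \sum_c p a c * Y a c i ^+ 2.
  rewrite /exp_sq_err.
  transitivity (\sum_(w : outcome v) \sum_i \sum_a \sum_b
      outcome_prob A w * (Y a (w a) i * Y b (w b) i)).
    apply: eq_bigr => w _; rewrite mulr_sumr; apply: eq_bigr => i _.
    rewrite xiE expr2 mulr_suml mulr_sumr; apply: eq_bigr => a _.
    by rewrite mulr_sumr mulr_sumr.
  rewrite exchange_big; apply: eq_bigr => i _.
  rewrite exchange_big; apply: eq_bigr => a _.
  rewrite exchange_big.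
  rewrite (bigD1 a) //= [X in _ + X]big1 ?addr0.
    by have := exp2 (p := p) (F := fun a c => Y a c i) a a P1 (P0 i); rewrite eqxx.
  move=> b hb.
  have := exp2 (p := p) (F := fun a c => Y a c i) a b P1 (P0 i).
  by rewrite eq_sym (negPf hb).
rewrite step2 exchange_big /=.
apply: (@le_trans _ _ (\sum_(a < npart v) (K + 2^-1))).
  apply: ler_sum => a _.
  rewrite exchange_big /=.
  have hs := particle_sign a.
  have hs2 : (((particle a).2)%:~R : R) ^+ 2 = 1.
    by case: hs => ->; rewrite ?mulrN1z ?sqrrN expr1n.
  rewrite (eq_bigr (fun c => p a c * \sum_i (contrib A (particle a).1 1 c i
        - A i (particle a).1) ^+ 2)); last first.
    move=> c _; rewrite mulr_sumr; apply: eq_bigr => i _.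
    by rewrite /Y (contrib_sign _ _ _ _ hs) -mulrBr exprMn hs2 mul1r.
  set k := (particle a).1.
  apply: le_trans (var1 (Hdiag k) (Hm k)) _.
  rewrite lerD2r.
  have := le_bigmax (0 : R) (fun k : 'I_N => (((nnz_col A k)%:R - 2) * sqnorm_off A k)) k.
  rewrite -/K nnz_colE //.
  have -> : ((nnz_off A k).+1%:R - 2 : R) = (nnz_off A k)%:R - 1.
    by rewrite -addn1 natrD; ring.
  by [].
rewrite sumr_const card_ord npartE.
have -> : ((l1norm v)%:R ^+ 2 / (l1norm v)%:R : R) = (l1norm v)%:R.
  case: (eqVneq (l1norm v) 0%N) => [->|h]; first by rewrite expr0n /= mul0r.
  by rewrite expr2 mulfK // pnatr_eq0.
by rewrite mulr_natr.
Qed.
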